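(* Let $\kappa$ be a kernel on $\mathbb{R}^d$ and $\psi$ a feature map such that, for a probability density $p$, $\kappa(\mathbf{x},\mathbf{x}')=\int\psi(\mathbf{x},\mathbf{v})\psi(\mathbf{x}',\mathbf{v})p(\mathbf{v})\,d\mathbf{v}$ for all $\mathbf{x},\mathbf{x}'$, and $\psi^2(\cdot\,;\cdot)\le b$ almost surely for some constant $b>0$. Fix points $\mathbf{x}_1,\dots,\mathbf{x}_n,\mathbf{x}'\in\mathbb{R}^d$ and let $\mathcal{V}_s=\{\mathbf{v}_1,\dots,\mathbf{v}_s\}$ be i.i.d. with density $p$. Then $$\mathbb{E}_{\mathcal{V}_s}\big[(\tilde{\mathbf{k}}'-\mathbf{k}')(\tilde{\mathbf{k}}'-\mathbf{k}')^T\big]\ \preceq\ \frac{b}{s}\mathbf{K}-\frac{1}{s}\mathbf{k}'\mathbf{k}'^T.$$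
   Context: $\boldsymbol{\psi}(\mathbf{x};\mathcal{V}_s)=\frac{1}{\sqrt{s}}[\psi(\mathbf{x};\mathbf{v}_1),\dots,\psi(\mathbf{x};\mathbf{v}_s)]^T\in\mathbb{R}^s$; $\boldsymbol{\Psi}\in\mathbb{R}^{n\times s}$ has $i$-th row $\boldsymbol{\psi}(\mathbf{x}_i;\mathcal{V}_s)^T$. $\mathbf{K}\in\mathbb{R}^{n\times n}$ has entries $K_{ij}=\kappa(\mathbf{x}_i,\mathbf{x}_j)$; $\mathbf{k}'\in\mathbb{R}^n$ has entries $k'_i=\kappa(\mathbf{x}_i,\mathbf{x}')$; $\tilde{\mathbf{k}}'=\boldsymbol{\Psi}\,\boldsymbol{\psi}(\mathbf{x}';\mathcal{V}_s)\in\mathbb{R}^n$, i.e. $\tilde k'_i=\boldsymbol{\psi}(\mathbf{x}_i;\mathcal{V}_s)^T\boldsymbol{\psi}(\mathbf{x}';\mathcal{V}_s)$. $\preceq$ is the Loewner order. *)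

(* Defs.v *)
From HB Require Import structures.
From mathcomp Require Import all_boot all_order all_algebra.
From mathcomp Require Import all_classical all_reals all_analysis.
Set Implicit Arguments. Unset Strict Implicit. Unset Printing Implicit Defensive.
Import Order.TTheory GRing.Theory Num.Theory.
Local Open Scope classical_set_scope.
Local Open Scope ring_scope.

Definition psd {R : realType} {n : nat} (M : 'M[R]_n) : Prop :=
  forall u : 'cV[R]_n, 0 <= (u^T *m M *m u) 0 0.

Definition loewner_le {R : realType} {n : nat} (A B : 'M[R]_n) : Prop :=
  psd (B - A).

(* Mutual independence of the random variables v_1, ..., v_s (product rule
   for all families of measurable events; taking A k = setT gives the
   product rule for every subfamily). *)
Definition mutually_independent {d1 d2} {Om : measurableType d1}
  {T : measurableType d2} {R : realType} (P : probability Om R) (s : nat)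
  (v : 'I_s -> Om -> T) : Prop :=
  forall A : 'I_s -> set T, (forall k, measurable (A k)) ->
    P (\bigcap_(k in [set: 'I_s]) (v k @^-1` A k)) =
    (\prod_(k < s) P (v k @^-1` A k))%E.

Definition has_law {d1 d2} {Om : measurableType d1}
  {T : measurableType d2} {R : realType} (P : probability Om R)
  (X : Om -> T) (mu : probability T R) : Prop :=
  forall A : set T, measurable A -> P (X @^-1` A) = mu A.


Definition psivec {R : realType} {X T : Type} {s : nat}
  (psi : X -> T -> R) (V : 'I_s -> T) (x : X) : 'cV[R]_s :=
  \col_(k < s) ((Num.sqrt (s%:R))^-1 * psi x (V k)).

Definition Psimx {R : realType} {X T : Type} {n s : nat}
  (psi : X -> T -> R) (V : 'I_s -> T) (xs : 'I_n -> X) : 'M[R]_(n, s) :=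
  \matrix_(i < n) (psivec psi V (xs i))^T.

Definition Kmx {R : realType} {X : Type} {n : nat}
  (kappa : X -> X -> R) (xs : 'I_n -> X) : 'M[R]_n :=
  \matrix_(i < n, j < n) kappa (xs i) (xs j).

Definition kvec {R : realType} {X : Type} {n : nat}
  (kappa : X -> X -> R) (xs : 'I_n -> X) (x' : X) : 'cV[R]_n :=
  \col_(i < n) kappa (xs i) x'.

Definition ktilde {R : realType} {X T : Type} {n s : nat}
  (psi : X -> T -> R) (V : 'I_s -> T) (xs : 'I_n -> X) (x' : X) : 'cV[R]_n :=
  Psimx psi V xs *m psivec psi V x'.

Definition Emx {d1} {Om : measurableType d1} {R : realType} {n : nat}
  (P : probability Om R) (M : Om -> 'M[R]_n) : 'M[R]_n :=
  \matrix_(i < n, j < n) fine (\int[P]_w (M w i j)%:E)%E.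

(* Main.v *)
Require Import Defs.
From HB Require Import structures.
From mathcomp Require Import all_boot all_order all_algebra.
From mathcomp Require Import all_classical all_reals all_analysis.
From mathcomp Require Import measurable_realfun.
From mathcomp Require Import ring lra.
Import Order.TTheory GRing.Theory Num.Theory.
Local Open Scope classical_set_scope.
Local Open Scope ring_scope.

Set Implicit Arguments. Unset Strict Implicit. Unset Printing Implicit Defensive.

Section bmf.
Context {R : realType} {d} {T : measurableType d}.

Definition bmf (f : T -> R) :=
  measurable_fun setT f /\ exists M : R, forall x, `|f x| <= M.

Lemma bmf_ext f g : f =1 g -> bmf f -> bmf g.
Proof. by move=> /funext ->. Qed.

Lemma bmf_cst c : bmf (fun=> c).
Proof. by split => //; exists `|c|. Qed.

Lemma bmf_add f g : bmf f -> bmf g -> bmf (fun x => f x + g x).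
Proof.
move=> [mf [M fM]] [mg [N gN]]; split; first exact: measurable_funD.
by exists (M + N) => x; apply: le_trans (ler_normD _ _) (lerD (fM x) (gN x)).
Qed.

Lemma bmf_opp f : bmf f -> bmf (fun x => - f x).
Proof.
move=> [mf [M fM]]; split; first exact: measurableT_comp.
by exists M => x; rewrite normrN.
Qed.

Lemma bmf_sub f g : bmf f -> bmf g -> bmf (fun x => f x - g x).
Proof. by move=> hf hg; apply: bmf_add => //; exact: bmf_opp. Qed.

Lemma bmf_mul f g : bmf f -> bmf g -> bmf (fun x => f x * g x).
Proof.
move=> [mf [M fM]] [mg [N gN]]; split; first exact: measurable_funM.
by exists (M * N) => x; rewrite normrM; apply: ler_pM.
Qed.

Lemma bmf_sum (I : Type) (r : seq I) (F : I -> T -> R) :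
  (forall i, bmf (F i)) -> bmf (fun x => \sum_(i <- r) F i x).
Proof.
move=> hF; elim: r => [|a r IH].
  by apply: (bmf_ext _ (bmf_cst 0)) => x; rewrite big_nil.
apply: (bmf_ext _ (bmf_add (hF a) IH)) => x; by rewrite big_cons.
Qed.

Lemma bmf_int (m : {measure set T -> \bar R}) f :
  (m setT < +oo)%E -> bmf f -> m.-integrable setT (EFin \o f).
Proof.
move=> mfin [mf [M fM]]; apply/integrableP; split; first exact/measurable_EFinP.
apply: (@le_lt_trans _ _ (\int[m]_x (cst M%:E) x))%E.
  apply: ge0_le_integral => //.
  all: try by move=> x _ /=; rewrite lee_fin fM.
  all: try by move=> x _ /=; rewrite lee_fin (le_trans _ (fM x)).
  all: try by apply: measurableT_comp => //; exact/measurable_EFinP.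
rewrite integral_cst //.
have [M0|M0] := leP 0 M.
  by apply: lte_mul_pinfty => //.
by rewrite (@le_lt_trans _ _ 0%E) // nmule_rle0 // lee_fin ltW.
Qed.

End bmf.

Section rint.
Context {R : realType} {d} {T : measurableType d} (m : probability T R).

Lemma prob_fin : (m setT < +oo)%E.
Proof. by rewrite probability_setT ltry. Qed.

Lemma RintD' f g : bmf f -> bmf g ->
  Rintegral m setT (fun x => f x + g x) = Rintegral m setT f + Rintegral m setT g.
Proof. by move=> hf hg; apply: RintegralD => //; apply: bmf_int => //; exact: prob_fin. Qed.

Lemma RintB' f g : bmf f -> bmf g ->
  Rintegral m setT (fun x => f x - g x) = Rintegral m setT f - Rintegral m setT g.
Proof. by move=> hf hg; apply: RintegralB => //; apply: bmf_int => //; exact: prob_fin. Qed.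

Lemma RintZ' c f : bmf f ->
  Rintegral m setT (fun x => c * f x) = c * Rintegral m setT f.
Proof. by move=> hf; apply: RintegralZl => //; apply: bmf_int => //; exact: prob_fin. Qed.

Lemma Rint_cst' c : Rintegral m setT (fun=> c) = c.
Proof. rewrite Rintegral_cst //.
rewrite (_ : fine _ = 1) ?mulr1 //; exact: (congr1 fine (probability_setT m)). Qed.

Lemma Rint_sum' (I : Type) (r : seq I) (F : I -> T -> R) :
  (forall i, bmf (F i)) ->
  Rintegral m setT (fun x => \sum_(i <- r) F i x) = \sum_(i <- r) Rintegral m setT (F i).
Proof.
move=> hF; elim: r => [|a r IH].
  rewrite big_nil -[RHS](Rint_cst' 0); by apply: eq_Rintegral => x _; rewrite big_nil.
rewrite big_cons -IH -RintD' //; last exact: bmf_sum.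
by apply: eq_Rintegral => x _; rewrite big_cons.
Qed.

Lemma le_Rint' f g : bmf f -> bmf g -> (forall x, f x <= g x) ->
  Rintegral m setT f <= Rintegral m setT g.
Proof.
by move=> hf hg fg; apply: le_Rintegral => //; apply: bmf_int => //; exact: prob_fin.
Qed.

End rint.

Lemma law_Rint {R : realType} {d} {T : measurableType d} (m : probability T R) d' (Om : measurableType d') (P : probability Om R) (X : Om -> T)
  (mX : measurable_fun setT X) (hl : has_law P X m) f : bmf f ->
  Rintegral P setT (fun w => f (X w)) = Rintegral m setT f.
Proof.
move=> hf; rewrite /Rintegral; congr fine.
rewrite [RHS](eq_measure_integral (pushforward P X)); last first.
  by move=> A mA _; exact/esym/hl.
rewrite integral_pushforward //.
- by case: hf => mf _; apply: measurableT_comp.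
- have hI : P.-integrable setT (EFin \o (f \o X)).
    apply: bmf_int; first exact: prob_fin.
    by case: hf => mf [M fM]; split; [exact: measurableT_comp | exists M => x; exact: fM].
  exact: hI.
Qed.



Lemma bmf_comp {R : realType} {d d'} {T : measurableType d} {U : measurableType d'}
  (f : U -> R) (X : T -> U) : bmf f -> measurable_fun setT X -> bmf (fun x => f (X x)).
Proof.
by case=> mf [M fM] mX; split; [exact: measurableT_comp | exists M => x; exact: fM].
Qed.

Lemma prod_rect {R : realType} {d} {T : measurableType d} (mu : probability T R)
  dO (Om : measurableType dO) (P : probability Om R) s (v : 'I_s -> Om -> T)
  (v_indep : mutually_independent P v) (v_law : forall k, has_law P (v k) mu)
  (k l : 'I_s) (kl : k != l) (A B : set T) : measurable A -> measurable B ->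
  P ((fun w => (v k w, v l w)) @^-1` (A `*` B)) = (mu A * mu B)%E.
Proof.
move=> mA mB.
pose F := fun j : 'I_s => if j == k then A else if j == l then B else setT.
have mF : forall j, measurable (F j).
  by move=> j; rewrite /F; case: ifP => _ //; case: ifP.
have := v_indep F mF.
have -> : \bigcap_(j in [set: 'I_s]) (v j @^-1` F j) =
          (fun w => (v k w, v l w)) @^-1` (A `*` B).
  apply/seteqP; split => w /=.
    move=> H; split.
      by have := H k Logic.I; rewrite /F eqxx.
    by have := H l Logic.I; rewrite /F eqxx eq_sym (negbTE kl).
  move=> [HA HB] j _; rewrite /F.
  case: ifP => [/eqP -> //|_]; case: ifP => [/eqP -> //|_] //.
move=> ->.
rewrite (bigD1 k) //= (bigD1 l) 1?eq_sym //=.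
rewrite big1; last first.
  move=> j /andP[jl jk]; rewrite /F (negbTE jk) (negbTE jl) preimage_setT.
  exact: probability_setT.
rewrite mule1 /F eqxx eq_sym (negbTE kl) eqxx.
by rewrite (v_law k A mA) (v_law l B mB).
Qed.

Lemma indep_Rint {R : realType} {d} {T : measurableType d} (mu : probability T R)
  dO (Om : measurableType dO) (P : probability Om R) s (v : 'I_s -> Om -> T)
  (v_meas : forall k, measurable_fun setT (v k))
  (v_indep : mutually_independent P v) (v_law : forall k, has_law P (v k) mu)
  (k l : 'I_s) (kl : k != l) f g : bmf f -> bmf g ->
  Rintegral P setT (fun w => f (v k w) * g (v l w)) =
  Rintegral mu setT f * Rintegral mu setT g.
Proof.
move=> hf hg.
pose phi := fun w => (v k w, v l w).
have mphi : measurable_fun setT phi := measurable_fun_pair (v_meas k) (v_meas l).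
pose h := fun z : T * T => f z.1 * g z.2.
have bh : bmf h.
  apply: bmf_mul.
    by apply: bmf_comp => //; exact: measurable_fst.
  by apply: bmf_comp => //; exact: measurable_snd.
have fin2 : ((mu \x mu)%E setT < +oo)%E.
  rewrite -setXTT product_measure1E //.
  have H1 : forall x y : \bar R, x = 1%E -> y = 1%E -> (x * y < +oo)%E.
    by move=> x y -> ->; rewrite mule1 ltry.
  by apply: H1; exact: probability_setT.
have step12 : (\int[P]_w (h (phi w))%:E = \int[(mu \x mu)%E]_z (h z)%:E)%E.
  have mh : measurable_fun setT (EFin \o h) by case: bh => mh _; apply: measurableT_comp.
  have hI : P.-integrable (phi @^-1` setT) ((EFin \o h) \o phi).
    have hI : P.-integrable setT (EFin \o (h \o phi)).
      by apply: bmf_int; [exact: prob_fin | exact: bmf_comp].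
    exact: hI.
  have ip := integral_pushforward mphi mh hI measurableT.
  rewrite -[LHS]/(\int[P]_(x in phi @^-1` setT) ((EFin \o h) \o phi) x)%E -ip.
  apply: eq_measure_integral => A mA _.
  symmetry; apply: product_measure_unique => // A1 A2 mA1 mA2.
  exact: prod_rect.
have gfin : (\int[mu]_y (g y)%:E)%E = (Rintegral mu setT g)%:E.
  rewrite /Rintegral fineK //; apply: integrable_fin_num => //.
  by apply: bmf_int => //; exact: prob_fin.
have step3 : Rintegral (mu \x mu)%E setT h =
             Rintegral mu setT (fun x => f x * Rintegral mu setT g).
  rewrite /Rintegral; congr fine.
  have := integral12_prod_meas1 (m1 := mu) (m2 := mu) (f := EFin \o h) (bmf_int fin2 bh).
  move=> <-; apply: eq_integral => x _.
  rewrite /fubini_F /h /=.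
  under eq_integral do rewrite EFinM.
  rewrite integralZl //; last by apply: bmf_int => //; exact: prob_fin.
  by rewrite gfin.
rewrite (_ : Rintegral P setT _ = Rintegral (mu \x mu)%E setT h); last first.
  by rewrite /Rintegral step12.
rewrite step3 RintegralZr //.
by apply: bmf_int => //; exact: prob_fin.
Qed.

Definition clampb {R : realType} (b r : R) :=
  Num.max (- Num.sqrt b) (Num.min (Num.sqrt b) r).

Lemma clamp_norm {R : realType} (b r : R) : `|clampb b r| <= Num.sqrt b.
Proof.
rewrite /clampb ler_norml; apply/andP; split.
  by rewrite le_max lexx.
rewrite ge_max ge_min lexx orTb andbT.
by rewrite lerNl (le_trans _ (sqrtr_ge0 b)) // oppr_le0 sqrtr_ge0.
Qed.

Lemma clamp_sq {R : realType} (b r : R) : 0 <= b -> clampb b r ^+ 2 <= b.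
Proof.
move=> b0; rewrite -[leRHS](sqr_sqrtr b0) -real_normK ?num_real //.
by rewrite lerXn2r ?nnegrE ?sqrtr_ge0 // clamp_norm.
Qed.

Lemma clamp_id {R : realType} (b r : R) : r ^+ 2 <= b -> clampb b r = r.
Proof.
move=> h; have : `|r| <= Num.sqrt b by rewrite -sqrtr_sqr ler_wsqrtr.
rewrite ler_norml => /andP[h1 h2].
by rewrite /clampb (min_r h2) (max_r h1).
Qed.

Lemma quadE {R : realType} n (M : 'M[R]_n) (u : 'cV[R]_n) :
  (u^T *m M *m u) 0 0 = \sum_i \sum_j u i 0 * u j 0 * M i j.
Proof.
rewrite mxE; under eq_bigr do rewrite mxE big_distrl.
rewrite exchange_big; apply: eq_bigr => i _; apply: eq_bigr => j _.
by rewrite !mxE /= mulrAC.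
Qed.

Lemma sum_mul_sum {R : realType} n m (a : 'I_n -> R) (c : 'I_m -> R) :
  (\sum_i a i) * (\sum_j c j) = \sum_i \sum_j a i * c j.
Proof. by rewrite big_distrl; apply: eq_bigr => i _; rewrite big_distrr. Qed.

Lemma ae_law {R : realType} {d} {T : measurableType d} (mu : probability T R)
  dO (Om : measurableType dO) (P : probability Om R) (X : Om -> T)
  (mX : measurable_fun setT X) (hl : has_law P X mu) (Q : T -> Prop) :
  {ae mu, forall t, Q t} -> {ae P, forall w, Q (X w)}.
Proof.
move=> [N [mN N0 sub]]; exists (X @^-1` N); split.
- by rewrite -[X @^-1` N]setTI; exact: mX.
- by rewrite hl.
- by move=> w /= nq; apply: sub.
Qed.

Lemma entry_formula {R : realType} {X T : Type} n s (phi : X -> T -> R)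
  (kappa : X -> X -> R) (V : 'I_s -> T) (xs : 'I_n -> X) (x' : X) i j :
  let D := ktilde phi V xs x' - kvec kappa xs x' in
  (D *m D^T) i j =
  (\sum_k (s%:R)^-1 * (phi (xs i) (V k) * phi x' (V k)) - kappa (xs i) x') *
  (\sum_k (s%:R)^-1 * (phi (xs j) (V k) * phi x' (V k)) - kappa (xs j) x').
Proof.
have hs : (Num.sqrt (s%:R : R))^-1 * (Num.sqrt (s%:R))^-1 = (s%:R)^-1.
  by rewrite -invfM -expr2 sqr_sqrtr // ler0n.
rewrite /= !mxE big_ord1 !mxE.
congr (_ * _); congr (_ - _); apply: eq_bigr => k _; rewrite !mxE.
  by rewrite mulrACA hs.
by rewrite mulrACA hs.
Qed.

Lemma Dsum_formula {R : realType} n s (s0 : (0 < s)%N) (u : 'I_n -> R)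
  (a : 'I_n -> 'I_s -> R) (c : 'I_s -> R) (ka : 'I_n -> R) :
  let Dt i := \sum_k (s%:R)^-1 * (a i k * c k) - ka i in
  let G k := (\sum_i u i * a i k) * c k - \sum_i u i * ka i in
  \sum_i \sum_j u i * u j * (Dt i * Dt j) =
  (s%:R)^-1 * (s%:R)^-1 * \sum_k \sum_l G k * G l.
Proof.
move=> Dt G.
have e1 : \sum_i u i * Dt i = (s%:R)^-1 * \sum_k G k.
  rewrite /Dt /G sumrB sumr_const card_ord mulrBr.
  under eq_bigr do rewrite mulrBr.
  rewrite sumrB; congr (_ - _).
    under eq_bigr do rewrite big_distrr.
    rewrite exchange_big big_distrr; apply: eq_bigr => k _ /=.
    rewrite big_distrl big_distrr; apply: eq_bigr => i _ /=; ring.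
  rewrite -(mulr_natl (\sum_i u i * ka i) s) mulrA mulVf ?mul1r //.
  by rewrite pnatr_eq0 -lt0n.
have e2 : \sum_i \sum_j u i * u j * (Dt i * Dt j) = (\sum_i u i * Dt i) * (\sum_j u j * Dt j).
  rewrite sum_mul_sum; apply: eq_bigr => i _; apply: eq_bigr => j _; ring.
rewrite e2 e1 -sum_mul_sum; ring.
Qed.

Lemma Dmeas {R : realType} {X : Type} {d} {T : measurableType d} {dO}
  {Om : measurableType dO} n s (phi : X -> T -> R)
  (hphi : forall x, measurable_fun setT (phi x)) (kappa : X -> X -> R)
  (v : 'I_s -> Om -> T) (v_meas : forall k, measurable_fun setT (v k))
  (xs : 'I_n -> X) (x' : X) (i : 'I_n) :
  measurable_fun setT (fun w =>
    \sum_k (s%:R)^-1 * (phi (xs i) (v k w) * phi x' (v k w)) - kappa (xs i) x').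
Proof.
apply: measurable_funB; last exact: measurable_cst.
apply: measurable_sum => k; apply: measurable_funM; first exact: measurable_cst.
by apply: measurable_funM; apply: measurableT_comp.
Qed.

Unset Implicit Arguments. Set Strict Implicit.

Theorem lemma8 (R : realType) (d : nat)
  (dT : measure_display) (T : measurableType dT) (mu : probability T R)
  (kappa : 'rV[R]_d -> 'rV[R]_d -> R) (psi : 'rV[R]_d -> T -> R) (b : R)
  (psi_meas : forall x, measurable_fun setT (psi x))
  (kappa_feat : forall x x',
     (kappa x x')%:E = (\int[mu]_v (psi x v * psi x' v)%:E)%E)
  (b_pos : 0 < b)
  (psi_bdd : forall x, {ae mu, forall v, psi x v ^+ 2 <= b})
  (n : nat) (xs : 'I_n -> 'rV[R]_d) (x' : 'rV[R]_d)
  (s : nat) (s_pos : (0 < s)%N)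
  (dO : measure_display) (Om : measurableType dO) (P : probability Om R)
  (v : 'I_s -> Om -> T)
  (v_meas : forall k, measurable_fun setT (v k))
  (v_indep : mutually_independent P v)
  (v_law : forall k, has_law P (v k) mu) :
  loewner_le
    (Emx P (fun w =>
       let D := ktilde psi (fun k => v k w) xs x' - kvec kappa xs x' in
       D *m D^T))
    ((b / s%:R) *: Kmx kappa xs - (s%:R)^-1 *: (kvec kappa xs x' *m (kvec kappa xs x')^T)).
Proof.
have b0 : 0 <= b := ltW b_pos.
pose pt := fun (i : option 'I_n) => if i is Some i then xs i else x'.
pose pst := fun x t => clampb b (psi x t).
have mpst : forall x, measurable_fun setT (pst x).
  move=> x; apply: measurable_maxr; first exact: measurable_cst.
  by apply: measurable_minr => //; exact: measurable_cst.
have bpst : forall x, bmf (pst x).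
  by move=> x; split => //; exists (Num.sqrt b) => t; exact: clamp_norm.
have pst_sq : forall x t, pst x t ^+ 2 <= b by move=> x t; exact: clamp_sq.
have ae_pst : forall x, {ae mu, forall t, psi x t = pst x t}.
  by move=> x; apply: filterS (psi_bdd x) => t h; rewrite /pst clamp_id.
have kap : forall x y, kappa x y = Rintegral mu setT (fun t => pst x t * pst y t).
  move=> x y; rewrite /Rintegral.
  rewrite (_ : (\int[mu]_t (pst x t * pst y t)%:E)%E = (kappa x y)%:E) //.
  rewrite kappa_feat; apply: ae_eq_integral => //.
  - by apply: measurableT_comp => //; case: (bmf_mul (bpst x) (bpst y)).
  - by apply: measurableT_comp => //; exact: measurable_funM.
  - by apply: filterS2 (ae_pst x) (ae_pst y) => t hx hy _; rewrite hx hy.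
pose Dt := fun (i : 'I_n) w =>
  \sum_k (s%:R)^-1 * (pst (xs i) (v k w) * pst x' (v k w)) - kappa (xs i) x'.
have bDt : forall i, bmf (Dt i).
  move=> i; apply: bmf_sub; last exact: bmf_cst.
  apply: bmf_sum => k; apply: bmf_mul; first exact: bmf_cst.
  by apply: bmf_mul; apply: bmf_comp.
have good : {ae P, forall w, forall k : 'I_s, forall i : option 'I_n,
    psi (pt i) (v k w) = pst (pt i) (v k w)}.
  apply: filter_forall => k; apply: filter_forall => i.
  exact: (ae_law (v_meas k) (v_law k) (ae_pst (pt i))).
have EmxE : forall i j, Emx P (fun w =>
       let D := ktilde psi (fun k => v k w) xs x' - kvec kappa xs x' in
       D *m D^T) i j = Rintegral P setT (fun w => Dt i w * Dt j w).
  move=> i j; rewrite mxE /Rintegral; congr fine.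
  rewrite [LHS](eq_integral (fun w => ((\sum_k (s%:R)^-1 * (psi (xs i) (v k w) * psi x' (v k w)) - kappa (xs i) x') *
      (\sum_k (s%:R)^-1 * (psi (xs j) (v k w) * psi x' (v k w)) - kappa (xs j) x'))%:E)); last first.
    by move=> w _; cbv beta zeta; rewrite entry_formula.
  apply: ae_eq_integral => //.
  - apply: measurableT_comp => //; apply: measurable_funM;
      [exact: (Dmeas psi_meas kappa v_meas xs x' i) | exact: (Dmeas psi_meas kappa v_meas xs x' j)].
  - by apply: measurableT_comp => //; case: (bmf_mul (bDt i) (bDt j)).
  - apply: filterS good => w hw _.
    have h1 : forall k i, psi (xs i) (v k w) = pst (xs i) (v k w) := fun k i => hw k (Some i).
    have h2 : forall k, psi x' (v k w) = pst x' (v k w) := fun k => hw k None.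
    rewrite /Dt; congr (EFin (_ * _)); congr (_ - _); apply: eq_bigr => k _;
      by rewrite h1 h2.
rewrite /loewner_le /psd => u.
have qlin : forall M N : 'M[R]_n,
    (u^T *m (M - N) *m u) 0 0 = (u^T *m M *m u) 0 0 - (u^T *m N *m u) 0 0.
  move=> M N; rewrite !quadE -sumrB; apply: eq_bigr => i _.
  by rewrite -sumrB; apply: eq_bigr => j _; rewrite !mxE mulrBr.
rewrite qlin subr_ge0 !quadE.
under eq_bigr => i _ do under eq_bigr => j _ do rewrite EmxE.
under [X in _ <= X]eq_bigr => i _ do under eq_bigr => j _ do rewrite !mxE big_ord1 !mxE.
pose c := \sum_i u i 0 * kappa (xs i) x'.
pose H := fun t => \sum_i u i 0 * pst (xs i) t.
pose G := fun t => H t * pst x' t - c.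
have bH : bmf H.
  by apply: bmf_sum => i; apply: bmf_mul; [exact: bmf_cst | exact: bpst].
have bF : bmf (fun t => H t * pst x' t) by apply: bmf_mul.
have bG : bmf G by apply: bmf_sub => //; exact: bmf_cst.
have RF : Rintegral mu setT (fun t => H t * pst x' t) = c.
  transitivity (Rintegral mu setT (fun t => \sum_i u i 0 * (pst (xs i) t * pst x' t))).
    apply: eq_Rintegral => t _; rewrite /H big_distrl; apply: eq_bigr => i _ /=.
    by rewrite mulrA.
  rewrite Rint_sum'; last first.
    by move=> i; apply: bmf_mul; [exact: bmf_cst | exact: bmf_mul].
  apply: eq_bigr => i _; rewrite RintZ'; last exact: bmf_mul.
  by rewrite kap.
have RG0 : Rintegral mu setT G = 0.
  rewrite /G RintB' //; last exact: bmf_cst.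
  by rewrite RF Rint_cst' subrr.
have RGG : Rintegral mu setT (fun t => G t * G t) =
    Rintegral mu setT (fun t => (H t * pst x' t) * (H t * pst x' t)) - c * c.
  transitivity (Rintegral mu setT (fun t =>
     ((H t * pst x' t) * (H t * pst x' t) - (2 * c) * (H t * pst x' t)) + c * c)).
    by apply: eq_Rintegral => t _; rewrite /G; ring.
  have b2 : bmf (fun t => 2 * c * (H t * pst x' t)).
    by apply: bmf_mul; [exact: bmf_cst | exact: bF].
  have bFF : bmf (fun t => (H t * pst x' t) * (H t * pst x' t)) by exact: bmf_mul.
  rewrite RintD'; [|exact: bmf_sub|exact: bmf_cst].
  rewrite RintB' // RintZ' // RF Rint_cst'; ring.
have RFF : Rintegral mu setT (fun t => (H t * pst x' t) * (H t * pst x' t)) <=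
    b * Rintegral mu setT (fun t => H t * H t).
  rewrite -RintZ'; last exact: bmf_mul.
  apply: le_Rint'; [exact: bmf_mul | by apply: bmf_mul; [exact: bmf_cst | exact: bmf_mul] |].
  move=> t; have -> : (H t * pst x' t) * (H t * pst x' t) = pst x' t ^+ 2 * (H t * H t) by ring.
  by apply: ler_wpM2r; [rewrite -expr2 sqr_ge0 | exact: pst_sq].
have RHH : Rintegral mu setT (fun t => H t * H t) =
    \sum_i \sum_j u i 0 * u j 0 * kappa (xs i) (xs j).
  transitivity (Rintegral mu setT (fun t =>
     \sum_i \sum_j u i 0 * u j 0 * (pst (xs i) t * pst (xs j) t))).
    apply: eq_Rintegral => t _; rewrite /H sum_mul_sum.
    by apply: eq_bigr => i _; apply: eq_bigr => j _; ring.
  rewrite Rint_sum'; last first.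
    move=> i; apply: bmf_sum => j.
    by apply: bmf_mul; [exact: bmf_cst | exact: bmf_mul].
  apply: eq_bigr => i _; rewrite Rint_sum'; last first.
    by move=> j; apply: bmf_mul; [exact: bmf_cst | exact: bmf_mul].
  apply: eq_bigr => j _; rewrite RintZ'; last exact: bmf_mul.
  by rewrite kap.
have inner : forall k, Rintegral P setT (fun w => \sum_l G (v k w) * G (v l w)) =
    Rintegral mu setT (fun t => G t * G t).
  move=> k; rewrite Rint_sum'; last by move=> l; apply: bmf_mul; apply: bmf_comp.
  rewrite (bigD1 k) //= big1 ?addr0.
    exact: (law_Rint (v_meas k) (v_law k) (f := fun t => G t * G t) (bmf_mul bG bG)).
  move=> l lk; rewrite (indep_Rint v_meas v_indep v_law) 1?eq_sym //.
  by rewrite RG0 mul0r.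
have L : \sum_i \sum_j u i 0 * u j 0 * Rintegral P setT (fun w => Dt i w * Dt j w) =
    (s%:R)^-1 * Rintegral mu setT (fun t => G t * G t).
  transitivity (Rintegral P setT (fun w =>
      \sum_i \sum_j u i 0 * u j 0 * (Dt i w * Dt j w))).
    rewrite Rint_sum'; last first.
      move=> i; apply: bmf_sum => j.
      by apply: bmf_mul; [exact: bmf_cst | exact: bmf_mul].
    apply: eq_bigr => i _; rewrite Rint_sum'; last first.
      by move=> j; apply: bmf_mul; [exact: bmf_cst | exact: bmf_mul].
    apply: eq_bigr => j _; rewrite RintZ' //; exact: bmf_mul.
  transitivity (Rintegral P setT (fun w =>
      (s%:R)^-1 * (s%:R)^-1 * \sum_k \sum_l G (v k w) * G (v l w))).
    apply: eq_Rintegral => w _.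
    exact: (Dsum_formula s_pos (fun i => u i 0) (fun i k => pst (xs i) (v k w))
              (fun k => pst x' (v k w)) (fun i => kappa (xs i) x')).
  have bGG : forall k, bmf (fun w => \sum_l G (v k w) * G (v l w)).
    by move=> k; apply: bmf_sum => l; apply: bmf_mul; apply: bmf_comp.
  rewrite RintZ'; last exact: bmf_sum.
  rewrite Rint_sum' //.
  rewrite (eq_bigr _ (fun k _ => inner k)) sumr_const card_ord.
  set RG2 := Rintegral mu setT _.
  rewrite -(mulr_natl RG2 s); field.
  by rewrite pnatr_eq0 -lt0n.
have RB : \sum_i \sum_j u i 0 * u j 0 *
        (b / s%:R * kappa (xs i) (xs j) - s%:R^-1 * (kappa (xs i) x' * kappa (xs j) x')) =
    b / s%:R * (\sum_i \sum_j u i 0 * u j 0 * kappa (xs i) (xs j)) - s%:R^-1 * (c * c).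
  rewrite /c sum_mul_sum !big_distrr -sumrB; apply: eq_bigr => i _ /=.
  rewrite !big_distrr -sumrB; apply: eq_bigr => j _ /=; ring.
rewrite L RB RGG -RHH mulrBr lerD2r.
rewrite (_ : b / s%:R * _ = s%:R^-1 * (b * Rintegral mu setT (fun t => H t * H t))); last by ring.
by apply: ler_wpM2l => //; rewrite invr_ge0 ler0n.
Qed.
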